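(* Let $F$ be Richard Thompson's group with standard generators $x_0,x_1,x_2,\ldots$. Let $k\ge1$, let $i_1,\ldots,i_k$ be even nonnegative integers, let $j_1,\ldots,j_k$ be odd positive integers, and let $\epsilon_1,\delta_1,\ldots,\epsilon_k,\delta_k\in\{1,-1\}$. Then the word $x_{i_1}^{\epsilon_1}x_{j_1}^{\delta_1}x_{i_2}^{\epsilon_2}x_{j_2}^{\delta_2}\cdots x_{i_k}^{\epsilon_k}x_{j_k}^{\delta_k}$ does not represent the identity element of $F$.
   Context: Thompson's group $F$ is the group given by the presentation $\langle x_0,x_1,x_2,\ldots \mid x_jx_i=x_ix_{j+1}\ (0\le i<j)\rangle$. *)

(* Defs.v *)
From mathcomp Require Import all_boot.
Set Implicit Arguments. Unset Strict Implicit. Unset Printing Implicit Defensive.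

(* Thompson's group F given by the presentation
   < x_0, x_1, ... | x_j x_i = x_i x_(j+1)  (0 <= i < j) >.
   A letter (n, true) stands for x_n, (n, false) for x_n^-1.
   Words are sequences of letters; F is the quotient of the set of words by
   the congruence generated by free cancellation and the defining relations. *)
Definition letter := (nat * bool)%type.
Definition linv (a : letter) : letter := (a.1, ~~ a.2).

Inductive Fequiv : seq letter -> seq letter -> Prop :=
| Fe_refl w : Fequiv w w
| Fe_sym u v : Fequiv u v -> Fequiv v u
| Fe_trans u v w : Fequiv u v -> Fequiv v w -> Fequiv u w
| Fe_cancel (u v : seq letter) (a : letter) :
    Fequiv (u ++ a :: linv a :: v) (u ++ v)
| Fe_rel (u v : seq letter) (i j : nat) : i < j ->
    Fequiv (u ++ [:: (j, true); (i, true)] ++ v)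
           (u ++ [:: (i, true); (j.+1, true)] ++ v).

Definition represents_identity (w : seq letter) : Prop := Fequiv w [::].

Definition gen_pow (n : nat) (b : bool) : letter := (n, b).

(* Main.v *)
Require Import Defs.
From mathcomp Require Import all_boot.
From mathcomp Require Import zify.
From Stdlib Require Import FunctionalExtensionality Classical.
Set Implicit Arguments. Unset Strict Implicit. Unset Printing Implicit Defensive.

Definition stream := nat -> bool.
Definition scons (b : bool) (s : stream) : stream :=
  fun k => if k is k'.+1 then s k' else b.
Definition stl (s : stream) : stream := fun k => s k.+1.

Definition X0 (s : stream) : stream :=
  if s 0 then (if s 1 then stl s else scons false (scons true (stl (stl s))))
  else scons false s.
Definition X0i (s : stream) : stream :=
  if s 0 then scons true s
  else if s 1 then scons true (scons false (stl (stl s)))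
  else stl s.
Fixpoint Xg (n : nat) (e : bool) (s : stream) : stream :=
  match n with
  | 0 => if e then X0 s else X0i s
  | n'.+1 => if s 0 then scons true (Xg n' e (stl s)) else s
  end.
Definition act (w : seq letter) (s : stream) : stream :=
  foldr (fun l s => Xg l.1 l.2 s) s w.

Lemma s_eta (s : stream) : s = scons (s 0) (stl s).
Proof. apply: functional_extensionality; by case. Qed.

Lemma s_eta2 (s : stream) : s = scons (s 0) (scons (s 1) (stl (stl s))).
Proof. apply: functional_extensionality; by do 2?case. Qed.

Lemma X0K s : X0i (X0 s) = s.
Proof.
rewrite (s_eta2 s); case: (s 0); case: (s 1) => //=.
Qed.

Lemma X0iK s : X0 (X0i s) = s.
Proof.
rewrite (s_eta2 s); case: (s 0); case: (s 1) => //=.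
Qed.

Lemma XgK n e s : Xg n (~~ e) (Xg n e s) = s.
Proof.
elim: n s => [|n IH] s /=.
  by case: e; rewrite ?X0K ?X0iK.
case E: (s 0) => /=; last by rewrite E.
rewrite IH; by rewrite [in RHS](s_eta s) E.
Qed.

Lemma comm i j e s : i < j -> Xg j e (Xg i true s) = Xg i true (Xg j.+1 e s).
Proof.
elim: i j s => [|i IH] [|j] s //= Hij.
  rewrite (s_eta2 s); case: (s 0); case: (s 1) => //=.
case E: (s 0) => /=; rewrite ?E //= IH //.
Qed.

Lemma act_cat u v s : act (u ++ v) s = act u (act v s).
Proof. by rewrite /act foldr_cat. Qed.

Lemma sound u0 v0 : Fequiv u0 v0 -> forall s, act u0 s = act v0 s.
Proof.
elim.
- by [].
- by move=> u v _ IH s; rewrite IH.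
- by move=> u v w _ IH1 _ IH2 s; rewrite IH1 IH2.
- move=> u v [n e] s; rewrite !act_cat /= /linv /=.
  by rewrite -{1}[e]negbK XgK.
- move=> u v i j Hij s; rewrite !act_cat /=.
  by rewrite comm.
Qed.
Definition shiftw (w : seq letter) : seq letter := map (fun l : letter => (l.1.+1, l.2)) w.
Definition unshift (w : seq letter) : seq letter := map (fun l : letter => (l.1.-1, l.2)) w.

Lemma act_shift w q : act (shiftw w) (scons true q) = scons true (act w q).
Proof. by elim: w => //= l w IH; rewrite IH. Qed.

Lemma shiftK w : all (fun l : letter => 0 < l.1) w -> shiftw (unshift w) = w.
Proof. by elim: w => //= [[n e]] w IH /andP[/= Hn Hw]; rewrite IH //; case: n Hn. Qed.

Lemma unshiftK w : unshift (shiftw w) = w.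
Proof. by elim: w => //= [[n e]] w IH; rewrite IH. Qed.

Lemma Xg_fix0 n e s : s 0 = false -> Xg n.+1 e s = s.
Proof. by move=> /= ->. Qed.

Lemma Xg_fix1 n e s : s 1 = false -> Xg n.+2 e s = s.
Proof.
move=> H; rewrite /=; case E: (s 0) => //.
by rewrite {1}/stl /= H [in RHS](s_eta s) E.
Qed.

Lemma Xg_0 n e s : Xg n.+1 e s 0 = s 0.
Proof. by rewrite /=; case E: (s 0). Qed.

Lemma Xg_1 n e s : Xg n.+2 e s 1 = s 1.
Proof. rewrite /=; case E: (s 0) => //=. rewrite /stl /=; case E1: (s 1) => /=; by rewrite ?E1. Qed.

Lemma commX0 n e s : 0 < n -> Xg n e (X0 s) = X0 (Xg n.+1 e s).
Proof. exact: comm. Qed.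

Lemma push k n e s : 0 < n -> Xg n e (iter k X0 s) = iter k X0 (Xg (n + k) e s).
Proof.
elim: k n => [|k IH] n Hn /=; first by rewrite addn0.
rewrite commX0 //.
by rewrite IH // addSnnS.
Qed.

Lemma iterX0_inj k a b : iter k X0 a = iter k X0 b -> a = b.
Proof.
elim: k => //= k IH H; apply: IH.
by rewrite -(X0K (iter k X0 a)) H X0K.
Qed.

Lemma X0_0 y : (y 0 = false \/ y 1 = false) -> X0 y 0 = false.
Proof. by rewrite /X0; case: (y 0); case: (y 1) => //= -[]. Qed.

Lemma iterX0_0 k s : s 1 = false -> 0 < k -> iter k X0 s 0 = false.
Proof.
move=> H1; elim: k => //= k IH _; apply: X0_0.
case: k IH => [|k] IH /=; first by right.
by left; apply: IH.
Qed.

Definition qN (N : nat) : stream := fun k => k == N.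

Lemma X0q N : X0 (qN N) = qN N.+1.
Proof.
apply: functional_extensionality => k.
case: N => [|N]; rewrite /X0 /qN /=.
  by case: k => [|[|k]].
by case: k.
Qed.

Lemma X0iq N : X0i (qN N.+1) = qN N.
Proof. by rewrite -X0q X0K. Qed.

Lemma qN_inj a b : qN a = qN b -> a = b.
Proof. move=> H; have := congr1 (fun f => f a) H; rewrite /qN eqxx => /esym/eqP //. Qed.

Definition cT (w : seq letter) := count (pred1 ((0,true) : letter)) w.
Definition cF (w : seq letter) := count (pred1 ((0,false) : letter)) w.

Lemma qlem w N : cT w + cF w <= N -> act w (qN N.+1) = qN (N.+1 + cT w - cF w).
Proof.
rewrite /cT /cF.
elim: w => [|[n e] w IH] /= H; first by rewrite addn0 subn0.
move: H IH; set a := count_mem _ w; set b := count_mem _ w => H IH.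
case: n H => [|n] H.
  case: e H => /= H.
    rewrite IH; last by lia.
    rewrite X0q; congr qN; lia.
  rewrite IH; last by lia.
  have -> : (N.+1 + a - b) = (N + a - b).+1 by lia.
  rewrite X0iq; congr qN; lia.
rewrite IH; last by lia.
rewrite Xg_fix0; last by rewrite /qN; apply/negbTE; lia.
congr qN; rewrite /=; lia.
Qed.

Fixpoint phase (c : bool) (w : seq letter) : bool :=
  if w is l :: w' then (odd l.1 == c) && phase (~~ c) w' else true.

Lemma phase_cat c x y : phase c (x ++ y) = phase c x && phase (c (+) odd (size x)) y.
Proof.
elim: x c => [|l x IH] c /=; first by rewrite addbF.
rewrite IH andbA; by case: c; case: (odd (size x)).
Qed.

Lemma phase_shift c w : phase c (shiftw w) = phase (~~ c) w.
Proof.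
elim: w c => //= l w IH c; rewrite IH.
by case: c; case: (odd l.1).
Qed.

Lemma phase_pat c x m y a b b' :
  phase c (x ++ (a,b) :: m ++ (a,b') :: y) ->
  odd (size m) /\ forall m', size m' = size m -> (forall d, phase d m' = phase (~~ d) m) ->
     phase c (x ++ m' ++ y).
Proof.
rewrite !phase_cat /= phase_cat /=.
move=> H; split.
  move: H; case: c; case: (odd a); case: (odd (size x)); case: (odd (size m));
    by rewrite /= ?andbF.
move=> m' Hs Hp; rewrite !phase_cat Hp Hs.
move: H; case: c; case: (odd a); case: (odd (size x)); case: (odd (size m));
  rewrite /= ?andbF ?andbT //=.
Qed.

Definition patA (w : seq letter) := exists (x m y : seq letter) (a : nat),
  w = x ++ (a,false) :: m ++ (a,true) :: y /\ all (fun l : letter => a < l.1) m.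
Definition patB (w : seq letter) := exists (x m y : seq letter) (a : nat),
  w = x ++ (a,true) :: m ++ (a,false) :: y /\ all (fun l : letter => a.+1 < l.1) m.
Definition alt (w : seq letter) := exists c, phase c w.
Definition reduced w := [/\ alt w, ~ patA w & ~ patB w].

Lemma pushm a m s : all (fun l : letter => a < l.1) m ->
  act m (Xg a true s) = Xg a true (act (shiftw m) s).
Proof.
elim: m => //= l m IH /andP[Hl Hm].
by rewrite IH // comm.
Qed.

Lemma all_unshift a m : all (fun l : letter => a.+1 < l.1) m ->
  all (fun l : letter => a < l.1) (unshift m).
Proof. by elim: m => //= l m IH /andP[H1 H2]; rewrite IH // andbT; lia. Qed.

Lemma all_pos a m : all (fun l : letter => a.+1 < l.1) m -> all (fun l : letter => 0 < l.1) m.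
Proof. by elim: m => //= l m IH /andP[H1 H2]; rewrite IH // andbT; lia. Qed.

Lemma phase_unshift c m : all (fun l : letter => 0 < l.1) m ->
  phase c (unshift m) = phase (~~ c) m.
Proof.
move=> H; rewrite -{2}(shiftK H) phase_shift negbK //.
Qed.

Lemma reduce n w : size w <= n -> alt w -> w <> [::] ->
  exists w', [/\ reduced w', w' <> [::] & forall s, act w' s = act w s].
Proof.
elim: n w => [|n IH] w Hs Ha Hn.
  by case: w Hs Hn Ha.
case: (classic (patA w)) => [[x [m [y [a [Hw Hm]]]]]|nA].
  have [c Hc] := Ha.
  have [Hodd Hp] := phase_pat (eq_ind _ (phase c) Hc _ Hw).
  have Ha' : alt (x ++ shiftw m ++ y).
    by exists c; apply: Hp; [rewrite size_map | move=> d; rewrite phase_shift].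
  have Hs' : size (x ++ shiftw m ++ y) <= n.
    move: Hs; rewrite Hw !size_cat /= size_cat /= size_map; lia.
  have Hn' : x ++ shiftw m ++ y <> [::].
    by case: m Hodd {Hm Hp Hw Ha' Hs'} => //= l m _; case: x.
  have [w' [Hr Hne Hact]] := IH _ Hs' Ha' Hn'.
  exists w'; split => // s; rewrite Hact Hw !act_cat /= act_cat /= pushm //.
  by have := XgK a true (act (shiftw m) (act y s)) => /= ->.
case: (classic (patB w)) => [[x [m [y [a [Hw Hm]]]]]|nB].
  have [c Hc] := Ha.
  have Hpos := all_pos Hm.
  have [Hodd Hp] := phase_pat (eq_ind _ (phase c) Hc _ Hw).
  have Ha' : alt (x ++ unshift m ++ y).
    by exists c; apply: Hp; [rewrite size_map | move=> d; rewrite phase_unshift].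
  have Hs' : size (x ++ unshift m ++ y) <= n.
    move: Hs; rewrite Hw !size_cat /= size_cat /= size_map; lia.
  have Hn' : x ++ unshift m ++ y <> [::].
    by case: m Hodd {Hm Hp Hw Ha' Hs' Hpos} => //= l m _; case: x.
  have [w' [Hr Hne Hact]] := IH _ Hs' Ha' Hn'.
  exists w'; split => // s; rewrite Hact Hw !act_cat /= act_cat /=.
  have := pushm (Xg a false (act y s)) (all_unshift Hm).
  rewrite shiftK // => <-.
  by have := XgK a false (act y s) => /= ->.
by exists w; split.
Qed.

Definition EL (L : seq letter) := L = [::] \/ exists L0, L = rcons L0 ((0,true) : letter).
Definition SR (R : seq letter) := R = [::] \/ exists R', R = ((0,false) : letter) :: R'.

Lemma first_zero (L : seq letter) : ((0,false) : letter) \notin L -> has (fun l : letter => l.1 == 0) L ->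
  exists (m y : seq letter), L = m ++ ((0,true) : letter) :: y /\ all (fun l : letter => l.1 != 0) m.
Proof.
elim: L => //= [[n e]] L IH; rewrite in_cons negb_or => /andP[H1 H2] /orP[/= /eqP Hn|Hh].
  subst n; case: e H1 => // _; by exists [::], L.
have [m [y [-> Hm]]] := IH H2 Hh.
case: n H1 => [|n] H1.
  by case: e H1 => //= _; exists [::], (m ++ (0, true) :: y).
by exists ((n.+1, e) :: m), y; split => //=.
Qed.

Lemma notin_zf (h : seq letter) b : all (fun l : letter => l.1 != 0) h -> ((0,b) : letter) \notin h.
Proof.
by move=> /allP H; apply/negP => /H.
Qed.

Lemma decomp w : ~ patA w -> exists L h R,
  [/\ w = L ++ h ++ R, EL L, ((0,false) : letter) \notin L, all (fun l : letter => l.1 != 0) h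
     & SR R /\ ((0,true) : letter) \notin R].
Proof.
elim: w => [|c w IH] nA.
  by exists [::], [::], [::]; split => //; [left|split => //; left].
have nA' : ~ patA w.
  move=> [x [m [y [a [Hw Hm]]]]]; apply: nA; exists (c :: x), m, y, a; by rewrite Hw.
have [L [h [R [Hw HE HF Hh [HS HT]]]]] := IH nA'.
case: c nA => [[|n] e] nA.
  case: e nA => nA.
    exists ((0,true) :: L), h, R; split => //=; first by rewrite Hw.
      case: HE => [->|[L0 ->]]; right; first by exists [::].
      by exists ((0,true) :: L0).
  case: HE => [HL|[L0 HL]].
    exists [::], [::], ((0,false) :: h ++ R); split => //=.
    - by rewrite Hw HL.
    - by left.
    - split; first by right; eexists.
      by rewrite in_cons mem_cat /= (negbTE (notin_zf true Hh)) (negbTE HT).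
  exfalso; apply: nA.
  have Hhas : has (fun l : letter => l.1 == 0) L by rewrite HL -cats1 has_cat /= orbT.
  have [m [y [HL' Hm]]] := first_zero HF Hhas.
  exists [::], m, (y ++ h ++ R), 0; split.
    by rewrite Hw HL' /= -catA.
  by apply: sub_all Hm => l; rewrite lt0n.
case: HE => [HL|[L0 HL]].
  exists [::], ((n.+1, e) :: h), R; split => //=; first by rewrite Hw HL.
  by left.
exists ((n.+1, e) :: L), h, R; split => //=; first by rewrite Hw.
by right; exists ((n.+1, e) :: L0); rewrite HL.
Qed.

Lemma EL_cons c L : EL (c :: L) -> EL L.
Proof.
case=> // -[L0 H]; case: L0 H => [|d L0] /= [_ ->]; [by left | right; by exists L0].
Qed.

Lemma LL L : EL L -> ((0,false) : letter) \notin L -> forall s, s 0 = true ->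
  exists s', act L s = iter (cT L) X0 s' /\ [/\ s' 0 = true, s' 1 = s 1 & (s 1 = false -> s' = s)].
Proof.
elim: L => [|c L IH] HE HF s Hs0.
  by exists s; split.
have HE' := EL_cons HE.
move: HF; rewrite in_cons negb_or => /andP[Hc HF].
have [s' [Ha [H0 H1 H2]]] := IH HE' HF s Hs0.
case: c HE Hc => [[|n] e] HE Hc.
  case: e HE Hc => // HE _.
  exists s'; split => //=; by rewrite Ha /cT /=.
have [k Hk] : exists k, cT L = k.+1.
  case: HE => [//|[[|d L0] /= [Hd HL]]]; first by [].
  exists (cT L0); by rewrite HL /cT -cats1 count_cat /= addn1.
exists (Xg (n + k).+2 e s'); split.
  change (act ((n.+1,e)::L) s) with (Xg n.+1 e (act L s)).
  have -> : cT ((n.+1,e)::L) = k.+1 by rewrite -Hk.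
  by rewrite Ha Hk push // addSn addnS.
split.
- by rewrite Xg_0.
- by rewrite Xg_1.
- move=> Hs1; rewrite H2 // Xg_fix1 //.
Qed.

Lemma SR_rcons R c : SR (rcons R c) -> SR R.
Proof.
case=> [|[R' H]]; first by case: R.
case: R H => [|d R0] /= H; first by left.
by case: H => -> _; right; eexists.
Qed.

Lemma RR R : SR R -> ((0,true) : letter) \notin R -> forall s, s 0 = true -> s 1 = false ->
  act R (iter (cF R) X0 s) = s.
Proof.
elim/last_ind: R => [|R c IH] HS HT s H0 H1 //.
have HS' := SR_rcons HS.
move: HT; rewrite mem_rcons in_cons negb_or => /andP[Hc HT].
rewrite /act foldr_rcons -/(act R _) /cF -cats1 count_cat /= -/(cF R).
case: c HS Hc => [[|n] e] HS Hc.
  case: e HS Hc => // HS _.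
  by rewrite addn1 /= X0K; apply: IH.
have -> : cF R + (((n.+1, e) == ((0, false) : letter)) + 0) = cF R by rewrite /= !addn0.
change (act R (Xg n.+1 e (iter (cF R) X0 s)) = s).
rewrite Xg_fix0; first by apply: IH.
apply: iterX0_0 => //.
case: HS => [|[R' H]]; first by case: R {IH HS' HT}.
case: R H {IH HS' HT} => [|d R0] /= H; first by case: H.
by case: H => -> _; rewrite /cF /=.
Qed.

Lemma reduced_sub x y z : reduced (x ++ y ++ z) -> reduced y.
Proof.
case=> [[c Hc] nA nB]; split.
- exists (c (+) odd (size x)); move: Hc; rewrite !phase_cat => /andP[_ /andP[-> _]] //.
- move=> [x' [m [y' [a [Hy Hm]]]]]; apply: nA.
  exists (x ++ x'), m, (y' ++ z), a; split => //.
  by rewrite Hy -!catA /= -catA.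
- move=> [x' [m [y' [a [Hy Hm]]]]]; apply: nB.
  exists (x ++ x'), m, (y' ++ z), a; split => //.
  by rewrite Hy -!catA /= -catA.
Qed.

Lemma all_shift (P : nat -> bool) m :
  all (fun l : letter => P l.1.+1) m -> all (fun l : letter => P l.1) (shiftw m).
Proof. by rewrite /shiftw all_map. Qed.

Lemma reduced_shift y : reduced (shiftw y) -> reduced y.
Proof.
case=> [[c Hc] nA nB]; split.
- by exists (~~ c); rewrite -phase_shift.
- move=> [x' [m [y' [a [Hy Hm]]]]]; apply: nA.
  exists (shiftw x'), (shiftw m), (shiftw y'), a.+1; split.
    by rewrite Hy /shiftw map_cat /= map_cat.
  by apply: all_shift.
- move=> [x' [m [y' [a [Hy Hm]]]]]; apply: nB.
  exists (shiftw x'), (shiftw m), (shiftw y'), a.+1; split.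
    by rewrite Hy /shiftw map_cat /= map_cat.
  by apply: all_shift.
Qed.

Lemma has0_count w : has (fun l : letter => l.1 == 0) w -> 0 < cT w + cF w.
Proof.
rewrite /cT /cF; elim: w => //= [[[|n] e]] w IH /=.
  by case: e => _ /=; lia.
move=> /IH /=; lia.
Qed.

Lemma count_zf (h : seq letter) b : all (fun l : letter => l.1 != 0) h ->
  count (pred1 ((0,b) : letter)) h = 0.
Proof. by move=> H; apply/eqP; rewrite -leqn0 leqNgt -has_count has_pred1 notin_zf. Qed.

Lemma count_notin (h : seq letter) (a : letter) : a \notin h -> count (pred1 a) h = 0.
Proof. by move=> H; apply/eqP; rewrite -leqn0 leqNgt -has_count has_pred1. Qed.

Lemma has1 (h : seq letter) : all (fun l : letter => l.1 != 0) h ->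
  ~~ all (fun l : letter => 1 < l.1) h -> has (fun l : letter => l.1 == 0) (unshift h).
Proof.
elim: h => //= [[[|[|n]] e]] h IH //= /andP[_ H1] H2.
Qed.

Lemma zf_pos (h : seq letter) : all (fun l : letter => l.1 != 0) h -> all (fun l : letter => 0 < l.1) h.
Proof. by apply: sub_all => l; rewrite lt0n. Qed.

Lemma D0 n w : size w <= n -> reduced w -> has (fun l : letter => l.1 == 0) w ->
  exists q : stream, q 0 = false /\ act w q <> q.
Proof.
elim: n w => [|n IH] w Hs Hr Hh.
  by case: w Hs Hh Hr.
case: (boolP (cT w == cF w)) => Heq; last first.
  exists (qN (cT w + cF w).+1); split => //.
  rewrite qlem // => /qN_inj; move: Heq => /eqP; lia.
have [Ha nA nB] := Hr.
have [L [h [R [Hw HE HF Hzf [HS HT]]]]] := decomp nA.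
have HcT : cT w = cT L.
  by rewrite Hw /cT !count_cat (count_zf true Hzf) (count_notin HT) !addn0.
have HcF : cF w = cF R.
  by rewrite Hw /cF !count_cat (count_zf false Hzf) (count_notin HF).
have Hpos := has0_count Hh.
set k := cT L.
have Hk : 0 < k by move: Heq Hpos; rewrite HcT HcF -/k => /eqP; lia.
have HkR : cF R = k by move: Heq; rewrite HcT HcF => /eqP.
have [L0 HL] : exists L0, L = rcons L0 ((0,true) : letter).
  case: HE => // HL; by move: Hk; rewrite /k HL.
have [R' HR] : exists R', R = ((0,false) : letter) :: R'.
  case: HS => // HR; by move: HkR Hk; rewrite HR /= => <-.
have Hw' : w = L0 ++ ((0,true) : letter) :: h ++ ((0,false) : letter) :: R'.
  by rewrite Hw HL HR -cats1 -catA.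
have Hh0 : h <> [::].
  move=> Hh0; have [c Hc] := Ha.
  have [Hodd _] := phase_pat (m := [::]) (eq_ind _ (phase c) Hc _ (etrans Hw' (congr1 (fun h => L0 ++ (0,true) :: h ++ (0,false) :: R') Hh0))).
  by [].
have Hn1 : ~~ all (fun l : letter => 1 < l.1) h.
  apply/negP => Hall; apply: nB; exists L0, h, R', 0; by split.
have Hsh : shiftw (unshift h) = h by rewrite shiftK // zf_pos.
have Hrh : reduced (unshift h).
  apply: reduced_shift; rewrite Hsh.
  apply: (@reduced_sub L h R); by rewrite -Hw.
have Hhas' := has1 Hzf Hn1.
have Hsz : size (unshift h) <= n.
  move: Hs; rewrite Hw HL !size_cat size_map size_rcons; lia.
have [q [Hq0 Hq]] := IH _ Hsz Hrh Hhas'.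
pose s1 := scons true q.
have Hs2 : act h s1 = scons true (act (unshift h) q) by rewrite -{1}Hsh act_shift.
exists (iter k X0 s1); split; first by apply: iterX0_0.
move=> Hfix.
have HRR := RR HS HT (s := s1) erefl Hq0.
rewrite HkR in HRR.
have [s' [HLs [H0 H1 H2]]] := LL HE HF (s := scons true (act (unshift h) q)) erefl.
move: Hfix; rewrite Hw !act_cat HRR Hs2 HLs -/k => /iterX0_inj Hs'.
rewrite Hs' /= in H1 H2.
have Hss := H2 (etrans (esym H1) Hq0).
apply: Hq; exact: (esym (congr1 stl Hss)).
Qed.

Lemma Dall k w : has (fun l : letter => l.1 <= k) w -> reduced w -> exists s, act w s <> s.
Proof.
elim: k w => [|k IH] w Hh Hr.
  have Hz : has (fun l : letter => l.1 == 0) w.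
    by move: Hh; apply: sub_has => l; rewrite leqn0.
  have [q [_ Hq]] := D0 (leqnn _) Hr Hz; by exists q.
case: (boolP (has (fun l : letter => l.1 == 0) w)) => Hz.
  have [q [_ Hq]] := D0 (leqnn _) Hr Hz; by exists q.
have Hpos : all (fun l : letter => 0 < l.1) w.
  by move: Hz; rewrite -all_predC; apply: sub_all => l /=; rewrite lt0n.
have Hsh := shiftK Hpos.
have Hr' : reduced (unshift w) by apply: reduced_shift; rewrite Hsh.
have Hh' : has (fun l : letter => l.1 <= k) (unshift w).
  move/hasP: Hh => [x Hx Hxk]; apply/hasP; exists (x.1.-1, x.2).
    by apply/mapP; exists x.
  move/allP: Hpos => /(_ x Hx) /=; lia.
have [s Hs] := IH _ Hh' Hr'.
exists (scons true s); rewrite -{1}Hsh act_shift => H; apply: Hs.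
exact: (congr1 stl H).
Qed.

Lemma phW m n (i j : nat -> nat) (eps delta : nat -> bool) :
  (forall t, m <= t < m + n -> ~~ odd (i t) /\ odd (j t)) ->
  phase false (flatten [seq [:: gen_pow (i t) (eps t); gen_pow (j t) (delta t)] | t <- iota m n]).
Proof.
elim: n m => //= n IH m H.
have Hm : m <= m < m + n.+1 by apply/andP; split => //; lia.
have [H1 H2] := H m Hm.
rewrite /gen_pow /= (negbTE H1) H2 /=.
apply: IH => t Ht; apply: H; move: Ht; lia.
Qed.

Theorem lemma3 (k : nat) (i j : nat -> nat) (eps delta : nat -> bool) :
  1 <= k ->
  (forall t, t < k -> ~~ odd (i t)) ->
  (forall t, t < k -> odd (j t)) ->
  ~ represents_identity
      (flatten [seq [:: gen_pow (i t) (eps t); gen_pow (j t) (delta t)]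
               | t <- iota 0 k]).
Proof.
move=> Hk Hi Hj Hid.
set W := flatten _ in Hid.
have Hs := sound Hid.
have HaW : alt W.
  exists false; apply: phW => t /andP[_ Ht]; split; [apply: Hi | apply: Hj]; lia.
have HnW : W <> [::] by rewrite /W; case: k Hk {Hi Hj Hid Hs HaW W}.
have [w' [Hr Hne Hact]] := reduce (leqnn _) HaW HnW.
have Hh : has (fun l : letter => l.1 <= (head ((0,true) : letter) w').1) w'.
  by case: w' Hr Hne Hact => //= l w' _ _ _; rewrite leqnn.
have [s Hs'] := Dall Hh Hr.
by apply: Hs'; rewrite Hact Hs.
Qed.
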